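(* Let $G$ be a finite $p$-group of coclass $2$ and nilpotence class at least $3$. Then $G$ is nested and its chain of centers consists exactly of the terms of the upper central series of $G$ (i.e. $\{X_0,\dots,X_n\}=\{Z_1(G),Z_2(G),\dots,Z_c(G)=G\}$ where $c$ is the nilpotence class). If moreover $G$ has nilpotence class at least $4$, then $G$ is not nested by degrees.
   Context: A $p$-group $G$ of order $p^m$ ($m\ge2$) has coclass $k$ if its nilpotence class is $m-k$. $Z_1(G)=Z(G)$, $Z_{i+1}(G)/Z_i(G)=Z(G/Z_i(G))$. For $\chi\in\mathrm{Irr}(G)$, $Z(\chi)=\{g\in G: |\chi(g)|=\chi(1)\}$. $G$ is nested if for all $\chi,\psi\in\mathrm{Irr}(G)$ either $Z(\chi)\le Z(\psi)$ or $Z(\psi)\le Z(\chi)$; then the distinct subgroups $Z(\chi)$ form a chain $G=X_0>X_1>\dots>X_n\ge1$, the chain of centers. $G$ is nested by degrees if for all $\chi,\psi\in\mathrm{Irr}(G)$ with $\psi(1)\le\chi(1)$ we have $Z(\chi)\le Z(\psi)$. *)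

(* Defs.v *)
From HB Require Import structures.
From mathcomp Require Import all_boot all_order all_algebra all_fingroup all_solvable all_field all_character.
Set Implicit Arguments. Unset Strict Implicit. Unset Printing Implicit Defensive.
Import Order.TTheory GRing.Theory Num.Theory.
Local Open Scope ring_scope.

(* Z(chi) for an irreducible character is the library's 'Z(chi)%CF (cfcenter),
   which for characters is {g in G | `|chi g| = chi 1}. *)

Definition nested (gT : finGroupType) (G : {group gT}) : Prop :=
  forall i j : Iirr G,
    ('Z('chi_i)%CF \subset 'Z('chi_j)%CF) \/ ('Z('chi_j)%CF \subset 'Z('chi_i)%CF).

Definition nested_by_degrees (gT : finGroupType) (G : {group gT}) : Prop :=
  forall i j : Iirr G, ('chi_j 1%g <= 'chi_i 1%g)%R ->
    'Z('chi_i)%CF \subset 'Z('chi_j)%CF.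

Definition centers (gT : finGroupType) (G : {group gT}) : {set {set gT}} :=
  [set 'Z('chi[G]_i)%CF | i : Iirr G].

(* Main.v *)
Require Import Defs.
From HB Require Import structures.
From mathcomp Require Import all_boot all_order all_algebra all_fingroup all_solvable all_field all_character.
Set Implicit Arguments. Unset Strict Implicit. Unset Printing Implicit Defensive.
Import GRing.Theory Num.Theory.
From mathcomp Require Import zify.
Section Gen.
Local Open Scope group_scope.
Variables (gT : finGroupType) (p : nat).
Hypothesis pr_p : prime p.
Implicit Types (H K A B L : {group gT}).

Lemma lsub A B : A \subset B -> logn p #|A| <= logn p #|B|.
Proof. by move=> sAB; apply: dvdn_leq_log; [exact: cardG_gt0 | exact: cardSg]. Qed.

Lemma lprop A B : p.-group B -> A \proper B -> logn p #|A| < logn p #|B|.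
Proof.
move=> pB pAB; have pA := pgroupS (proper_sub pAB) pB.
rewrite -(ltn_exp2l _ _ (prime_gt1 pr_p)) -(card_pgroup pB) -(card_pgroup pA).
exact: proper_card pAB.
Qed.

Lemma leq_eqG A B : p.-group B -> A \subset B -> logn p #|B| <= logn p #|A| -> A :=: B.
Proof.
move=> pB sAB le; apply/eqP; rewrite eqEcard sAB /=.
rewrite (card_pgroup pB) (card_pgroup (pgroupS sAB pB)).
by rewrite leq_exp2l ?prime_gt1.
Qed.

Lemma normal_ucn_card H K : p.-group H -> K <| H ->
  forall i, K \subset 'Z_i(H) \/ i <= logn p #|K :&: 'Z_i(H)|.
Proof.
move=> pH nKH; elim=> [|i IH]; first by right.
have [sKZ|nsKZ] := boolP (K \subset 'Z_i(H)).
  by left; apply: subset_trans sKZ (ucn_subS i H).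
case: IH => [a|le]; first by rewrite a in nsKZ.
right.
have sub: K :&: 'Z_i(H) \subset K :&: 'Z_i.+1(H) by rewrite setIS ?ucn_subS.
have pI: p.-group (K :&: 'Z_i.+1(H))%G.
  exact: pgroupS (subset_trans (subsetIl _ _) (normal_sub nKH)) pH.
suff prop: (K :&: 'Z_i(H))%G \proper (K :&: 'Z_i.+1(H))%G.
  apply: leq_ltn_trans le _; exact: (lprop pI prop).
rewrite properE sub /=; apply/negP=> sZ.
have nilQ : nilpotent (H / 'Z_i(H)) by apply: quotient_nil; apply: pgroup_nil pH.
have nKN : K \subset 'N('Z_i(H)).
  exact: subset_trans (normal_sub nKH) (ucn_norm i H).
have nKQ : K / 'Z_i(H) <| H / 'Z_i(H) by apply: quotient_normal.
have ntK : K / 'Z_i(H) != 1.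
  by apply: contra nsKZ => /eqP K1; rewrite -quotient_sub1 // K1.
have := meet_center_nil nilQ nKQ ntK.
rewrite -ucn_central -quotientIG ?ucn_subS //.
rewrite quotientS1 ?eqxx //.
exact: subset_trans sZ (subsetIr _ _).
Qed.

Lemma normal_ucn H K : p.-group H -> K <| H -> K \subset 'Z_(logn p #|K|)(H).
Proof.
move=> pH nKH; case: (normal_ucn_card pH nKH (logn p #|K|)) => // le.
have pK := pgroupS (normal_sub nKH) pH.
have := leq_eqG pK (subsetIl K 'Z_(logn p #|K|)(H)) le.
by move=> eq; apply/setIidPl.
Qed.

Lemma precenter_sub H K : K <| H -> coset K @*^-1 'Z(H / K) \subset H.
Proof. by move=> nKH; rewrite sub_cosetpre_quo // center_sub. Qed.

Lemma precenterE H K : K <| H ->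
  coset K @*^-1 'Z(H / K) = [set x in H | [~: [set x], H] \subset K].
Proof.
move=> nKH; apply/setP=> x.
rewrite -(setIidPr (precenter_sub nKH)) [LHS]inE [RHS]inE.
case Hx: (x \in H) => //=; have nZG := normal_norm nKH.
rewrite -sub1set -sub_quotient_pre -?quotient_cents2 ?sub1set ?(subsetP nZG) //.
by rewrite subsetI quotientS ?sub1set.
Qed.

Lemma precenterS H K L : K <| H -> L <| H -> K \subset L ->
  coset K @*^-1 'Z(H / K) \subset coset L @*^-1 'Z(H / L).
Proof.
move=> nK nL sKL; rewrite (precenterE nK) (precenterE nL).
apply/subsetP=> x; rewrite !inE => /andP[-> s]; exact: subset_trans s sKL.
Qed.

Lemma index_center_prime H K : K <| H -> ~ prime #|H : coset K @*^-1 'Z(H / K)|.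
Proof.
move=> nKH; rewrite -{1}(quotientGK nKH) index_cosetpre => pr.
have: cyclic ((H / K) / 'Z(H / K)).
  by apply: prime_cyclic; rewrite card_quotient ?normal_norm ?center_normal.
move/cyclic_center_factor_abelian/center_idP => eqZ.
have : #|H / K : 'Z(H / K)| = 1%N.
  have eqZ' : 'Z(H / K) = H / K := eqZ.
  by rewrite eqZ' indexgg.
by move=> e; rewrite e in pr.
Qed.

Lemma index_p A B : p.-group B -> A \subset B ->
  #|B : A| = (p ^ (logn p #|B| - logn p #|A|))%N.
Proof.
move=> pB sAB; have pA := pgroupS sAB pB.
have le := lsub sAB.
have L := Lagrange sAB.
have p0 : (0 < p ^ logn p #|A|)%N by rewrite expn_gt0 prime_gt0.
apply/eqP; rewrite -(eqn_pmul2l p0) -expnD subnKC //.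
by rewrite -(card_pgroup pA) -(card_pgroup pB) L.
Qed.

End Gen.


Section Coclass.
Local Open Scope group_scope.
Variables (gT : finGroupType) (G : {group gT}) (p : nat).
Hypotheses (pr_p : prime p) (pG : p.-group G).
Hypothesis oG : logn p #|G| = (nil_class G + 2)%N.
Hypothesis c2 : (2 <= nil_class G)%N.

Local Notation c := (nil_class G).
Local Notation z i := (logn p #|'Z_i(G)|).

Let nilG : nilpotent G := pgroup_nil pG.
Let pZ i : p.-group 'Z_i(G) := pgroupS (ucn_sub i G) pG.

Lemma ucn_c m : (c <= m)%N -> 'Z_m(G) = G.
Proof. by move=> le; apply/(ucn_nil_classP m nilG). Qed.

Lemma zc m : (c <= m)%N -> z m = (c + 2)%N.
Proof. by move=> le; rewrite ucn_c. Qed.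

Lemma ucn_stable i m : 'Z_i.+1(G) = 'Z_i(G) -> 'Z_(i + m)(G) = 'Z_i(G).
Proof.
move=> eq; elim: m => [|m IH]; first by rewrite addn0.
by rewrite addnS ucnSn IH -ucnSn eq.
Qed.

Lemma ucn_proper i : (i < c)%N -> 'Z_i(G) \proper 'Z_i.+1(G).
Proof.
move=> lt; rewrite properE ucn_subS /=; apply/negP=> sub.
have eq : 'Z_i.+1(G) = 'Z_i(G) by apply/eqP; rewrite eqEsubset sub ucn_subS.
have := ucn_stable (c - i) eq; rewrite subnKC; last exact: ltnW.
rewrite ucn_c // => eqG.
have : (c <= i)%N by apply/(ucn_nil_classP i nilG).
by rewrite leqNgt lt.
Qed.

Lemma z_lt i : (i < c)%N -> (z i < z i.+1)%N.
Proof. by move=> lt; apply: (lprop pr_p (pZ i.+1)); apply: ucn_proper. Qed.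

Lemma z_add i m : (i + m <= c)%N -> (z i + m <= z (i + m))%N.
Proof.
elim: m => [|m IH] le; first by rewrite !addn0.
rewrite addnS in le *; have lt := z_lt le.
have := IH (ltnW le); lia.
Qed.

Lemma z_ge i : (i <= c)%N -> (i <= z i)%N.
Proof. by move=> le; have := z_add (i := 0) (m := i) le; rewrite ucn0 cards1 logn1. Qed.

Lemma z_top : (z c.-1 + 2 <= c + 2)%N.
Proof.
have ltc : (c.-1 < c)%N by lia.
have lt := z_lt ltc.
rewrite prednK in lt; last by lia.
rewrite (zc (leqnn _)) in lt.
rewrite leqNgt; apply/negP => gt.
have e : z c.-1 = (c + 1)%N by lia.
have : #|G : 'Z_c.-1(G)| = p.
  by rewrite (index_p pr_p pG (ucn_sub _ _)) oG e; have ->: (c + 2 - (c + 1) = 1)%N by lia.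
have -> : c.-1 = (c.-2).+1 by lia.
rewrite ucnSn => ip.
by apply: (index_center_prime (ucn_normal c.-2 G)); rewrite ip.
Qed.

Lemma z_le i : (i < c)%N -> (z i <= i.+1)%N.
Proof.
move=> lt; have := z_add (i := i) (m := c.-1 - i); rewrite subnKC; last lia.
move=> h; have := h (leq_pred _) => {h}; have := z_top; lia.
Qed.

Lemma z0 : z 0 = 0%N.
Proof. by rewrite ucn0 cards1 logn1. Qed.

Lemma precenter_ucn (K : {group gT}) : K <| G ->
  exists2 m, (0 < m)%N & coset K @*^-1 'Z(G / K) = 'Z_m(G).
Proof.
move=> nKG.
pose W := (coset K @*^-1 'Z(G / K))%G.
have sWG : W \subset G := precenter_sub nKG.
have pW : p.-group W := pgroupS sWG pG.
pose k := logn p #|K|.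
have sKZ : K \subset 'Z_k(G) := normal_ucn pr_p pG nKG.
have nZk : 'Z_k(G) <| G := ucn_normal k G.
have sWZ : W \subset 'Z_k.+1(G).
  by rewrite ucnSn; apply: (precenterS nKG nZk sKZ).
have pK : p.-group K := pgroupS (normal_sub nKG) pG.
have [kc|kc] := leqP c k.
  have ab : abelian (G / K).
    apply: (p2group_abelian (p := p)); first exact: quotient_pgroup.
    rewrite card_quotient ?normal_norm // (index_p pr_p pG (normal_sub nKG)).
    by rewrite pfactorK // oG leq_subLR leq_add2r.
  exists c; first exact: ltnW c2.
  by rewrite ucn_c // (center_idP ab) quotientGK.
have hk1 := z_le kc.
have hk2 : (k <= z k)%N by apply: z_ge; apply: ltnW.
have [ezk|ezk] := eqVneq (z k) k.
  have eK : K :=: 'Z_k(G) by apply: (leq_eqG pr_p (pZ k) sKZ); rewrite ezk.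
  exists k.+1 => //; by rewrite ucnSn -eK.
have ezk' : z k = k.+1 by apply/eqP; rewrite eqn_leq hk1 ltn_neqAle eq_sym ezk hk2.
have k0 : (0 < k)%N.
  rewrite lt0n; apply/eqP => k0'; move: ezk'; rewrite k0' z0.
  by [].
have sZW : 'Z_k(G) \subset W.
  rewrite -sub_quotient_pre; last exact: subset_trans (ucn_sub k G) (normal_norm nKG).
  have oQ : #|'Z_k(G) / K| = p.
    rewrite card_quotient; last exact: subset_trans (ucn_sub k G) (normal_norm nKG).
    by rewrite (index_p pr_p (pZ k) sKZ) ezk' -/k subSnn expn1.
  apply: prime_meetG; first by rewrite oQ.
  apply: meet_center_nil; first by apply: quotient_nil.
    by apply: quotient_normal.
  by apply/eqP => e; move: oQ; rewrite e cards1 => p1; move: pr_p; rewrite -p1.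
have lW1 := lsub p sZW.
have lW2 := lsub p sWZ.
have [kc'|kc'] := ltnP k.+1 c.
  have hk3 := z_le kc'.
  have [lt|ge] := leqP (logn p #|W|) k.+1.
    exists k => //; symmetry; apply: (leq_eqG pr_p pW sZW); change (logn p #|W| <= z k)%N; by rewrite ezk'.
  exists k.+1 => //; apply: (leq_eqG pr_p (pZ k.+1) sWZ).
  change (z k.+1 <= logn p #|W|)%N; exact: leq_trans hk3 ge.
have ek : k.+1 = c by apply/eqP; rewrite eqn_leq kc kc'.
have lG := lsub p sWG.
have [lt|ge] := leqP (logn p #|W|) k.+1.
  exists k => //; symmetry; apply: (leq_eqG pr_p pW sZW).
  change (logn p #|W| <= z k)%N; by rewrite ezk'.
have [lt2|ge2] := leqP (c + 2) (logn p #|W|).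
  exists c; first exact: ltnW c2.
  by rewrite ucn_c //; apply: (leq_eqG pr_p pG sWG); rewrite oG.
exfalso; apply: (index_center_prime nKG).
rewrite (index_p pr_p pG sWG) oG.
have e : logn p #|W| = c.+1.
  have h1 : (logn p #|W| < c.+2)%N by move: ge2; rewrite addn2.
  have h2 : (c < logn p #|W|)%N by rewrite -ek.
  by apply/eqP; rewrite eqn_leq -ltnS h1 h2.
have -> : (c + 2 - logn p #|W| = 1)%N by rewrite e addn2 subSS subSnn.
by rewrite expn1.
Qed.

End Coclass.
Section Chars.
Local Open Scope group_scope.
Variables (gT : finGroupType) (G : {group gT}).

Lemma cfcenter_pre (i : Iirr G) :
  'Z(('chi_i)%R)%CF = coset (cfker ('chi_i)%R) @*^-1 'Z(G / cfker ('chi_i)%R).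
Proof.
by rewrite -cfcenter_eq_center quotientGK // cfker_center_normal.
Qed.

Lemma cfcenter_mod (N : {group gT}) (j : Iirr (G / N)) : N <| G ->
  'Z(('chi_(mod_Iirr j))%R)%CF = coset N @*^-1 'Z(('chi_j)%R)%CF.
Proof.
move=> nNG; apply/setP => x.
have sub : coset N @*^-1 'Z(('chi_j)%R)%CF \subset G.
  by rewrite sub_cosetpre_quo // cfcenter_sub.
case Gx: (x \in G); last first.
  apply/idP/idP => [/(subsetP (cfcenter_sub _))|/(subsetP sub)]; by rewrite Gx.
have nx : x \in 'N(N) := subsetP (normal_norm nNG) x Gx.
rewrite (irr_cfcenterE (mod_Iirr j) Gx) mod_IirrE //.
rewrite (cfModE _ nNG Gx) (cfModE _ nNG (group1 G)) (coset_id (group1 N)).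
have -> : (x \in coset N @*^-1 'Z(('chi_j)%R)%CF) = (coset N x \in 'Z(('chi_j)%R)%CF).
  by apply/morphpreP/idP => [[]|] //; split.
by rewrite (irr_cfcenterE j (mem_quotient N Gx)).
Qed.

End Chars.

Section Main.
Local Open Scope group_scope.

Lemma main_aux (gT : finGroupType) (G : {group gT}) (p : nat) :
  prime p -> (p.-group G)%g ->
  logn p #|G| = (nil_class G + 2)%N ->
  (3 <= nil_class G)%N ->
  [/\ nested G,
      centers G = [set ('Z_k.+1(G))%g | k : 'I_(nil_class G)]
    & (4 <= nil_class G)%N -> ~ nested_by_degrees G].
Proof.
move=> pr_p pG oG c3.
have c2 : (2 <= nil_class G)%N by apply: ltnW.
have nilG : nilpotent G := pgroup_nil pG.
have cent_ucn : forall i : Iirr G,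
    exists2 m, (0 < m)%N & 'Z(('chi_i)%R)%CF = 'Z_m(G).
  by move=> i; rewrite cfcenter_pre; apply: (precenter_ucn pr_p pG oG c2); apply: cfker_normal.
have nest : nested G.
  move=> i j; have [m _ ->] := cent_ucn i; have [n _ ->] := cent_ucn j.
  case: (leqP m n) => [le|lt]; [left | right]; apply: ucn_sub_geq => //.
  exact: ltnW.
have surj : forall k, (k < nil_class G)%N ->
    exists i : Iirr G, 'Z(('chi_i)%R)%CF = 'Z_k.+1(G).
  move=> k lt.
  have nN : 'Z_k(G) <| G := ucn_normal k G.
  pose N := 'Z_k(G)%G.
  pose j0 := [arg min_(j < (0%R : Iirr (G / N))) #|'Z(('chi_j)%R)%CF|].
  have min : forall j : Iirr (G / N),
      'Z(('chi_j0)%R)%CF \subset 'Z(('chi_j)%R)%CF.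
    rewrite /j0; case: arg_minnP => // j1 _ Hj1 j.
    have := nest (mod_Iirr j1) (mod_Iirr j).
    rewrite !(cfcenter_mod _ nN) !cosetpreSK; case=> // sub.
    have e : 'Z(('chi_j)%R)%CF == 'Z(('chi_j1)%R)%CF.
      by rewrite eqEcard sub Hj1.
    by rewrite -(eqP e).
  have eZ : 'Z(('chi_j0)%R)%CF = 'Z(G / N).
    apply/eqP; rewrite eqEsubset; apply/andP; split.
      by rewrite -cap_cfcenter_irr; apply/bigcapsP => j _; apply: min.
    by rewrite -cap_cfcenter_irr; apply: bigcap_inf.
  exists (mod_Iirr j0).
  by rewrite (cfcenter_mod _ nN) eZ ucnSn.
split => //.
  apply/setP => A; apply/imsetP/imsetP.
    case=> i _ ->; have [m m0 ->] := cent_ucn i.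
    have [le|gt] := leqP m (nil_class G).
      have lt' : (m.-1 < nil_class G)%N by rewrite prednK.
      exists (Ordinal lt') => //=.
      by rewrite prednK.
    have c0 : (0 < nil_class G)%N by apply: leq_trans c3.
    have ltc : ((nil_class G).-1 < nil_class G)%N by rewrite prednK.
    exists (Ordinal ltc) => //=.
    have uc : forall n, (nil_class G <= n)%N -> 'Z_n(G) = G.
      by move=> n le; apply/(ucn_nil_classP n nilG).
    by rewrite prednK // (uc _ (ltnW gt)) (uc _ (leqnn _)).
  case=> k _ ->; have [i ei] := surj k (ltn_ord k).
  by exists i.
move=> c4 nbd.
pose k4 := (nil_class G - 4)%N.
have ec : nil_class G = k4.+4 by rewrite /k4; lia.
have [i1 e1] := surj k4.+3 ltac:(rewrite ec; lia).
have [i2 e2] := surj k4.+2 ltac:(rewrite ec; lia).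
have [i3 e3] := surj k4.+1 ltac:(rewrite ec; lia).
have [i4 e4] := surj k4 ltac:(rewrite ec; lia).
have deg : forall i : Iirr G, exists a, ('chi_i 1%g = (p ^ a)%:R)%R.
  move=> i; have /natrP[n en] := Cnat_irr1 i.
  have := dvd_irr1_cardG i; rewrite en dvdC_nat (card_pgroup pG).
  by case/(dvdn_pfactor _ _ pr_p) => a _ ->; exists a.
have dlt : forall (i j : Iirr G) a b, ('chi_i 1%g = (p ^ a)%:R)%R ->
    ('chi_j 1%g = (p ^ b)%:R)%R ->
    ~~ ('Z(('chi_i)%R)%CF \subset 'Z(('chi_j)%R)%CF) -> (a < b)%N.
  move=> i j a b ei ej ns; rewrite ltnNge; apply: contra ns => le.
  by apply: nbd; rewrite ei ej ler_nat leq_exp2l // prime_gt1.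
have nsub : forall k, (k < nil_class G)%N -> ~~ ('Z_k.+1(G) \subset 'Z_k(G)).
  move=> k lt; have := ucn_proper pG lt.
  by rewrite properE => /andP[].
have [a1 d1] := deg i1; have [a2 d2] := deg i2.
have [a3 d3] := deg i3; have [a4 d4] := deg i4.
have l12 : (a1 < a2)%N by apply: (dlt i1 i2) => //; rewrite e1 e2 nsub // ec.
have l23 : (a2 < a3)%N by apply: (dlt i2 i3) => //; rewrite e2 e3 nsub // ec.
have l34 : (a3 < a4)%N by apply: (dlt i3 i4) => //; rewrite e3 e4 nsub //; rewrite ec; lia.
have hb := (irr1_bound i4).1.
rewrite d4 e4 -natrX ler_nat -expnM in hb.
rewrite (index_p pr_p pG (ucn_sub _ _)) leq_exp2l ?prime_gt1 // in hb.
have zg : (k4.+1 <= logn p #|'Z_k4.+1(G)|)%N.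
  by apply: (z_ge pr_p pG oG c2); rewrite ec; lia.
have zg' : (k4.+1 <= logn p #|'Z_k4.+1(G)%G|)%N := zg.
move: hb; rewrite oG ec; lia.
Qed.

End Main.

Theorem mainTheorem19 (gT : finGroupType) (G : {group gT}) (p : nat) :
  prime p -> (p.-group G)%g ->
  logn p #|G| = (nil_class G + 2)%N ->
  (3 <= nil_class G)%N ->
  [/\ nested G,
      centers G = [set ('Z_k.+1(G))%g | k : 'I_(nil_class G)]
    & (4 <= nil_class G)%N -> ~ nested_by_degrees G].
Proof. exact: main_aux. Qed.
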